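(* Let $\mathcal C$ be a cartesian closed category with regular epi-mono factorizations, $S$ an object, and $T$ the state monad on $S$. For every $T$-algebra $(X,h)$, with $Y=L(X,h)$, the morphism $e_X^*:X\to Y^S$ is a morphism of $T$-algebras from $(X,h)$ to $(Y^S,\epsilon_Y^S)$, i.e. $e_X^*\circ h=\epsilon_Y^S\circ T(e_X^* )$.
   Context: $U(X)=X^S$, $F(X)=S\times X$, $F\dashv U$, $T=UF$, $TX=(S\times X)^S$. For $f:S\times X\to Z$, $f^*:X\to Z^S$ is its transpose. $\epsilon_Z:S\times Z^S\to Z$ is the counit (evaluation), $\eta_X=(\mathrm{id}_{S\times X})^*$, $\mu_X=(\epsilon_{S\times X})^S$; $q_X:S\times X\to X$ is the second projection. A $T$-algebra is $(X,h)$, $h:TX\to X$, with $h\circ Th=h\circ\mu_X$, $h\circ\eta_X=\mathrm{id}_X$; a morphism $(X,h)\to(X',h')$ is $u:X\to X'$ with $h'\circ Tu=u\circ h$. For a $T$-algebra $(X,h)$, $f_X=h\circ q_{S\times X}^*:S\times X\to X$ is factored as $f_X=m_X\circ e_X$ with $e_X:S\times X\to Y$ a regular epimorphism and $m_X:Y\to X$ a monomorphism; $Y=L(X,h)$ and $e_X^*:X\to Y^S$ is the transpose of $e_X$. *)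

(* Defs.v *)
Set Implicit Arguments.
Unset Strict Implicit.

Record CCC : Type := {
  ob :> Type;
  hom : ob -> ob -> Type;
  idm : forall A, hom A A;
  comp : forall A B C, hom B C -> hom A B -> hom A C;
  comp_assoc : forall A B C D (h : hom C D) (g : hom B C) (f : hom A B),
      comp h (comp g f) = comp (comp h g) f;
  comp_id_l : forall A B (f : hom A B), comp (idm B) f = f;
  comp_id_r : forall A B (f : hom A B), comp f (idm A) = f;
  term : ob;
  to_term : forall A, hom A term;
  to_term_uniq : forall A (f g : hom A term), f = g;
  prod : ob -> ob -> ob;
  pr1 : forall A B, hom (prod A B) A;
  pr2 : forall A B, hom (prod A B) B;
  pairing : forall X A B, hom X A -> hom X B -> hom X (prod A B);
  pr1_pair : forall X A B (f : hom X A) (g : hom X B), comp (pr1 A B) (pairing f g) = f;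
  pr2_pair : forall X A B (f : hom X A) (g : hom X B), comp (pr2 A B) (pairing f g) = g;
  pair_uniq : forall X A B (h : hom X (prod A B)),
      pairing (comp (pr1 A B) h) (comp (pr2 A B) h) = h;
  (* exponentials: expo B Z = Z^B, with evaluation S x Z^S -> Z *)
  expo : ob -> ob -> ob;
  ev : forall B Z, hom (prod B (expo B Z)) Z;
  curry : forall B X Z, hom (prod B X) Z -> hom X (expo B Z);
  ev_curry : forall B X Z (f : hom (prod B X) Z),
      comp (ev B Z) (pairing (pr1 B X) (comp (curry f) (pr2 B X))) = f;
  curry_uniq : forall B X Z (g : hom X (expo B Z)),
      curry (comp (ev B Z) (pairing (pr1 B X) (comp g (pr2 B X)))) = g
}.

Arguments hom {c} _ _.
Arguments idm {c} A.
Arguments comp {c A B C} _ _.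
Arguments term {c}.
Arguments prod {c} _ _.
Arguments pr1 {c} A B.
Arguments pr2 {c} A B.
Arguments pairing {c X A B} _ _.
Arguments expo {c} _ _.
Arguments ev {c} B Z.
Arguments curry {c B X Z} _.

Section Defs.
Variable C : CCC.

Definition prodmap {A A' B B' : C} (f : hom A A') (g : hom B B') :
  hom (prod A B) (prod A' B') :=
  pairing (comp f (pr1 A B)) (comp g (pr2 A B)).

Definition mono {A B : C} (m : hom A B) : Prop :=
  forall (Z : C) (g h : hom Z A), comp m g = comp m h -> g = h.

Definition regular_epi {A B : C} (e : hom A B) : Prop :=
  exists (K : C) (u v : hom K A),
    comp e u = comp e v /\
    forall (Z : C) (w : hom A Z), comp w u = comp w v ->
      exists k : hom B Z, comp k e = w /\
        forall k' : hom B Z, comp k' e = w -> k' = k.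

Definition has_reg_epi_mono_factorizations : Prop :=
  forall (A B : C) (f : hom A B),
    exists (Y : C) (e : hom A Y) (m : hom Y B),
      regular_epi e /\ mono m /\ f = comp m e.

Variable S : C.

Definition Fo (X : C) : C := prod S X.
Definition Uo (X : C) : C := expo S X.
Definition To (X : C) : C := Uo (Fo X).

Definition transp {X Z : C} (f : hom (prod S X) Z) : hom X (expo S Z) := curry f.

Definition eps (Z : C) : hom (prod S (expo S Z)) Z := ev S Z.

Definition expmap {A B : C} (g : hom A B) : hom (expo S A) (expo S B) :=
  transp (comp g (eps A)).

Definition Ffun {X Z : C} (f : hom X Z) : hom (Fo X) (Fo Z) := prodmap (idm S) f.
Definition Ufun {X Z : C} (f : hom X Z) : hom (Uo X) (Uo Z) := expmap f.
Definition Tfun {X Z : C} (f : hom X Z) : hom (To X) (To Z) := Ufun (Ffun f).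

Definition eta (X : C) : hom X (To X) := transp (idm (prod S X)).
Definition mu (X : C) : hom (To (To X)) (To X) := expmap (eps (prod S X)).

Definition q (X : C) : hom (prod S X) X := pr2 S X.

Definition is_T_algebra (X : C) (h : hom (To X) X) : Prop :=
  comp h (Tfun h) = comp h (mu X) /\ comp h (eta X) = idm X.

Definition is_T_alg_morphism (X X' : C) (h : hom (To X) X) (h' : hom (To X') X')
  (u : hom X X') : Prop :=
  comp h' (Tfun u) = comp u h.

Definition fX (X : C) (h : hom (To X) X) : hom (prod S X) X :=
  comp h (transp (q (prod S X))).

End Defs.

Arguments prodmap {C A A' B B'} f g.
Arguments mono {C A B} m.
Arguments regular_epi {C A B} e.
Arguments transp {C S X Z} f.
Arguments Tfun {C S X Z} f.
Arguments is_T_alg_morphism {C} S {X X'} h h' u.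
Arguments is_T_algebra {C} S {X} h.
Arguments expmap {C} S {A B} g.
Arguments eps {C} S Z.
Arguments fX {C} S {X} h.

(* Main.v *)
Require Import Defs.

Section L.
Variable K : CCC.
Implicit Types A B D E : K.

Lemma cA A B D E (f : hom D E) (g : hom B D) (k : hom A B) :
  comp f (comp g k) = comp (comp f g) k.
Proof. apply comp_assoc. Qed.

Lemma pair_ext X A B (a b : hom X (prod A B)) :
  comp (pr1 A B) a = comp (pr1 A B) b -> comp (pr2 A B) a = comp (pr2 A B) b -> a = b.
Proof. intros H1 H2. rewrite <- (pair_uniq a), <- (pair_uniq b), H1, H2. reflexivity. Qed.

Lemma pr1_pm A A' B B' (f : hom A A') (g : hom B B') :
  comp (pr1 A' B') (prodmap f g) = comp f (pr1 A B).
Proof. unfold prodmap. apply pr1_pair. Qed.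
Lemma pr2_pm A A' B B' (f : hom A A') (g : hom B B') :
  comp (pr2 A' B') (prodmap f g) = comp g (pr2 A B).
Proof. unfold prodmap. apply pr2_pair. Qed.

Lemma pm_comp A A' A'' B B' B'' (f : hom A' A'') (g : hom B' B'') (f' : hom A A') (g' : hom B B') :
  comp (prodmap f g) (prodmap f' g') = prodmap (comp f f') (comp g g').
Proof.
  apply pair_ext.
  - rewrite cA, !pr1_pm, <- cA, pr1_pm, cA. reflexivity.
  - rewrite cA, !pr2_pm, <- cA, pr2_pm, cA. reflexivity.
Qed.

Lemma pm_id_pair (S Xo Z : K) (g : hom Xo Z) :
  prodmap (idm S) g = pairing (pr1 S Xo) (comp g (pr2 S Xo)).
Proof. unfold prodmap. rewrite comp_id_l. reflexivity. Qed.

Lemma ev_pm (S Xo Z : K) (f : hom (prod S Xo) Z) :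
  comp (ev S Z) (prodmap (idm S) (curry f)) = f.
Proof. rewrite pm_id_pair. apply ev_curry. Qed.

Lemma curry_ext (S Xo Z : K) (a b : hom Xo (expo S Z)) :
  comp (ev S Z) (prodmap (idm S) a) = comp (ev S Z) (prodmap (idm S) b) -> a = b.
Proof.
  intro H. rewrite <- (curry_uniq a), <- (curry_uniq b), <- !pm_id_pair, H. reflexivity.
Qed.

Lemma curry_nat (S Xo X' Z : K) (f : hom (prod S Xo) Z) (g : hom X' Xo) :
  comp (curry f) g = curry (comp f (prodmap (idm S) g)).
Proof.
  apply curry_ext. rewrite ev_pm.
  replace (prodmap (idm S) (comp (curry f) g)) with
    (comp (prodmap (idm S) (curry f)) (prodmap (idm S) g)).
  - rewrite cA, ev_pm. reflexivity.
  - rewrite pm_comp, comp_id_l. reflexivity.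
Qed.

Lemma pm_id_comp (S A B D : K) (a : hom B D) (b : hom A B) :
  prodmap (idm S) (comp a b) = comp (prodmap (idm S) a) (prodmap (idm S) b).
Proof. rewrite pm_comp, comp_id_l. reflexivity. Qed.

End L.

Theorem mainTheorem9 (C : CCC) (HC : has_reg_epi_mono_factorizations C)
  (S X : C) (h : hom (To S X) X) (Halg : is_T_algebra S h)
  (Y : C) (e : hom (prod S X) Y) (m : hom Y X)
  (He : regular_epi e) (Hm : mono m) (Hfact : fX S h = comp m e) :
  is_T_alg_morphism S h (expmap S (eps S Y)) (transp e).
Proof.
  destruct Halg as [Hassoc Hunit].
  assert (H1 : comp (Tfun h) (transp (q S (prod S (To S X))))
               = comp (transp (q S (prod S X))) (prodmap (idm S) h)).
  { unfold Tfun, Ufun, Ffun, expmap, transp, q, eps, To, Uo, Fo in *.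
    rewrite !curry_nat. rewrite <- cA, ev_pm. f_equal.
    rewrite pr2_pm. reflexivity. }
  assert (H2 : comp (mu S X) (transp (q S (prod S (To S X))))
               = comp (transp (q S (prod S X))) (eps S (prod S X))).
  { unfold mu, expmap, transp, q, eps, To, Uo, Fo in *. rewrite !curry_nat.
    rewrite <- cA, ev_pm. f_equal. rewrite pr2_pm. reflexivity. }
  assert (Hk : comp e (prodmap (idm S) h) = comp e (eps S (prod S X))).
  { apply Hm. rewrite !cA, <- Hfact. unfold fX.
    rewrite <- !cA.
    etransitivity. { apply (f_equal (comp h)). symmetry. exact H1. }
    rewrite cA, Hassoc, <- cA.
    apply (f_equal (comp h)). exact H2. }
  unfold is_T_alg_morphism. unfold transp.
  apply curry_ext.
  unfold To, Uo, Fo, expmap, transp, eps, Tfun, Ufun, Ffun in *.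
  rewrite pm_id_comp, cA, ev_pm.
  rewrite <- cA. unfold expmap, transp. rewrite ev_pm, cA, ev_pm.
  rewrite pm_id_comp, cA, ev_pm, Hk. reflexivity.
Qed.
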